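(* Let $v=q_1q_2\cdots q_s$ be the factorization of $v\ge2$ into powers of distinct primes, and let $k=\min\{q_i:1\le i\le s\}$. Let $t,d$ be positive integers with $q_i>t+1$ for all $i$ and $d+1\le v$. Then an optimum $(d,t)$-CDA$((d+1)v^t;k+t-1,v)$ exists.
   Context: Consecutive $t$-way interaction in an $N\times k$ array $A=(a_{ij})$ over a $v$-set $V$: $T=\{(i,x_i),\dots,(i+t-1,x_{i+t-1})\}$, $1\le i\le k-t+1$, $x_r\in V$; $\rho(A,T)=\{r: a_{r,j}=x_j\ \forall (j,x_j)\in T\}$, $\rho(A,\mathcal T)=\bigcup_{T\in\mathcal T}\rho(A,T)$. A $(d,t)$-CDA$(N;k,v)$ is an $N\times k$ array over $V$ in which every $t$ consecutive columns contain every $t$-tuple at least once, and such that for every set $\mathcal T$ of exactly $d$ distinct consecutive $t$-way interactions and every consecutive $t$-way interaction $T$: $\rho(A,T)\subseteq\rho(A,\mathcal T)$ iff $T\in\mathcal T$. It is optimum if $N=(d+1)v^t$. *)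

(* Defs.v *)
From mathcomp Require Import all_boot.
Set Implicit Arguments. Unset Strict Implicit. Unset Printing Implicit Defensive.

Definition array (N k v : nat) := 'I_N -> 'I_k -> 'I_v.

(* A candidate consecutive t-way interaction: a starting column i (0-based)
   together with the t values x_0..x_{t-1} placed in columns i..i+t-1,
   i.e. the set {(i+j, x_j) : j < t}. *)
Definition interaction (k v t : nat) := ('I_k * t.-tuple 'I_v)%type.

Definition valid_int (k v t : nat) (T : interaction k v t) : bool :=
  T.1 + t <= k.

Definition rho (N k v t : nat) (A : array N k v) (T : interaction k v t)
  : {set 'I_N} :=
  [set r | [forall j : 'I_t, [exists c : 'I_k,
             (val c == T.1 + j) && (A r c == tnth T.2 j)]]].

Definition rhoS (N k v t : nat) (A : array N k v)
  (S : {set interaction k v t}) : {set 'I_N} :=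
  \bigcup_(T in S) rho A T.

Definition is_CDA (d t N k v : nat) (A : array N k v) : Prop :=
  (forall T : interaction k v t, valid_int T -> rho A T != set0) /\
  (forall S : {set interaction k v t},
     (forall T, T \in S -> valid_int T) -> #|S| = d ->
     forall T : interaction k v t, valid_int T ->
       (rho A T \subset rhoS A S <-> T \in S)).

Definition is_optimum_CDA (d t N k v : nat) (A : array N k v) : Prop :=
  is_CDA d t A /\ N = (d + 1) * v ^ t.

Definition min_prime_power (v : nat) : nat :=
  \big[minn/v]_(p <- primes v) v`_p.

(* Main.v *)
Require Import Defs.
From mathcomp Require Import all_boot all_algebra all_field zify.
Import GRing.Theory.
Local Open Scope ring_scope.
Set Implicit Arguments. Unset Strict Implicit. Unset Printing Implicit Defensive.

Lemma vand_zero (F : fieldType) (m : nat) (g : nat -> F) (x : 'I_m -> F) :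
  injective x -> (forall j, \sum_(i < m) g i * x j ^+ i = 0) -> forall i, (i < m)%N -> g i = 0.
Proof.
move=> xinj H i im.
have P0 : \poly_(i < m) g i = 0.
  apply: (@roots_geq_poly_eq0 _ _ [seq x j | j <- enum 'I_m]).
  - by apply/allP => _ /mapP [j _ ->]; rewrite /root horner_poly H.
  - by rewrite map_inj_uniq ?enum_uniq.
  - by rewrite size_map size_enum_ord size_poly.
by have := congr1 (fun p : {poly F} => p`_i) P0; rewrite coef_poly im coef0.
Qed.

Definition goodE (V : finType) (q t : nat) (E : {ffun 'I_t -> V} -> V -> 'I_q -> V) : Prop :=
 (forall c (s : 'I_t -> 'I_q), injective s -> injective (fun h => [ffun i => E h c (s i)])) /\
 (forall (s : 'I_t.+1 -> 'I_q), injective s -> forall h c h' c',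
    (forall i, E h c (s i) = E h' c' (s i)) -> h = h' /\ c = c').

Definition hn (F : fieldType) t (h : {ffun 'I_t -> F}) (n : nat) : F :=
  match insub n with Some i => h i | None => 0 end.

Lemma hnE (F : fieldType) t (h : {ffun 'I_t -> F}) (i : 'I_t) : hn h i = h i.
Proof. by rewrite /hn valK. Qed.

Lemma field_good (F : finFieldType) q t (a : 'I_q -> F) : injective a ->
  goodE (fun h c j => \sum_(i < t) h i * a j ^+ i + c * a j ^+ t).
Proof.
move=> ainj; split.
- move=> c s sinj h h' /ffunP E; apply/ffunP => i.
  have S : forall j, \sum_(i < t) (hn h i - hn h' i) * (a \o s) j ^+ i = 0.
    move=> j; have := E j; rewrite !ffunE => /(congr1 (fun z => z - c * a (s j) ^+ t)).
    rewrite !addrK => Ej /=.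
    rewrite -[RHS](subrr (\sum_(i < t) h' i * a (s j) ^+ i)).
    rewrite -{1}Ej -sumrB; apply: eq_bigr => k _; by rewrite !hnE mulrBl.
  have := @vand_zero F t (fun n => hn h n - hn h' n) (a \o s)
     (fun x y e => sinj _ _ (ainj _ _ e)) S i (ltn_ord i).
  by rewrite !hnE => /eqP; rewrite subr_eq0 => /eqP.
- move=> s sinj h c h' c' E.
  have Z := @vand_zero F t.+1 (fun n => if (n < t)%N then hn h n - hn h' n else c - c') (a \o s)
     (fun x y e => sinj _ _ (ainj _ _ e)).
  have {}Z : forall i, (i < t.+1)%N -> (if (i < t)%N then hn h i - hn h' i else c - c') = 0.
    apply: Z => j; rewrite big_ord_recr /= ltnn.
    have -> : \sum_(i < t) (if (i < t)%N then hn h i - hn h' i else c - c') * a (s j) ^+ i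
       = \sum_(i < t) h i * a (s j) ^+ i - \sum_(i < t) h' i * a (s j) ^+ i.
      by rewrite -sumrB; apply: eq_bigr => k _; rewrite ltn_ord !hnE mulrBl.
    by rewrite mulrBl addrACA E -opprD subrr.
  split.
  + apply/ffunP => i; have := Z i (ltnW (ltn_ord i)); rewrite ltn_ord !hnE.
    by move/eqP; rewrite subr_eq0 => /eqP.
  + by have := Z t (ltnSn t); rewrite ltnn => /eqP; rewrite subr_eq0 => /eqP.
Qed.
Local Close Scope ring_scope.

Definition phiT (V W : finType) (eVW : #|V| = #|W|) (x : V) : W :=
  enum_val (cast_ord eVW (enum_rank x)).
Definition psiT (V W : finType) (eVW : #|V| = #|W|) (y : W) : V :=
  enum_val (cast_ord (esym eVW) (enum_rank y)).
Lemma phiTK (V W : finType) (eVW : #|V| = #|W|) : cancel (phiT eVW) (psiT eVW).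
Proof. by move=> x; rewrite /phiT /psiT enum_valK cast_ordK enum_rankK. Qed.
Lemma psiTK (V W : finType) (eVW : #|V| = #|W|) : cancel (psiT eVW) (phiT eVW).
Proof. by move=> x; rewrite /phiT /psiT enum_valK cast_ordKV enum_rankK. Qed.

Lemma good_transport (V W : finType) q t (E : {ffun 'I_t -> V} -> V -> 'I_q -> V) :
  #|V| = #|W| -> goodE E -> exists E' : {ffun 'I_t -> W} -> W -> 'I_q -> W, goodE E'.
Proof.
move=> e [Ga Gb].
exists (fun h c j => phiT e (E [ffun i => psiT e (h i)] (psiT e c) j)); split.
- move=> c s sinj h h' /ffunP H.
  have : [ffun i => psiT e (h i)] = [ffun i => psiT e (h' i)].
    apply: (Ga (psiT e c) s sinj); apply/ffunP => i.
    have := H i; rewrite !ffunE; exact: (can_inj (phiTK e)).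
  move=> /ffunP H2; apply/ffunP => i; have := H2 i; rewrite !ffunE.
  exact: (can_inj (psiTK e)).
- move=> s sinj h c h' c' H.
  have [H1 H2] := Gb s sinj _ _ _ _ (fun i => can_inj (phiTK e) (H i)).
  split; last exact: (can_inj (psiTK e)).
  move/ffunP: H1 => H1; apply/ffunP => i; have := H1 i; rewrite !ffunE.
  exact: (can_inj (psiTK e)).
Qed.

Lemma good_prod (V1 V2 : finType) q t (E1 : {ffun 'I_t -> V1} -> V1 -> 'I_q -> V1)
  (E2 : {ffun 'I_t -> V2} -> V2 -> 'I_q -> V2) :
  goodE E1 -> goodE E2 ->
  goodE (fun (h : {ffun 'I_t -> V1 * V2}) (c : V1 * V2) j =>
           (E1 [ffun i => (h i).1] c.1 j, E2 [ffun i => (h i).2] c.2 j)).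
Proof.
move=> [Ga1 Gb1] [Ga2 Gb2]; split.
- move=> c s sinj h h' /ffunP H.
  have /ffunP K1 : [ffun i => (h i).1] = [ffun i => (h' i).1].
    apply: (Ga1 c.1 s sinj); apply/ffunP => i; have := H i; rewrite !ffunE.
    by case.
  have /ffunP K2 : [ffun i => (h i).2] = [ffun i => (h' i).2].
    apply: (Ga2 c.2 s sinj); apply/ffunP => i; have := H i; rewrite !ffunE.
    by case.
  apply/ffunP => i; have := K1 i; have := K2 i; rewrite !ffunE.
  by case: (h i) => ? ?; case: (h' i) => ? ? /= -> ->.
- move=> s sinj h c h' c' H.
  have [/ffunP K1 L1] := Gb1 s sinj _ _ _ _ (fun i => congr1 fst (H i)).
  have [/ffunP K2 L2] := Gb2 s sinj _ _ _ _ (fun i => congr1 snd (H i)).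
  split.
  + apply/ffunP => i; have := K1 i; have := K2 i; rewrite !ffunE.
    by case: (h i) => ? ?; case: (h' i) => ? ? /= -> ->.
  + exact: injective_projections L1 L2.
Qed.

Lemma good_one q t : exists E : {ffun 'I_t -> 'I_1} -> 'I_1 -> 'I_q -> 'I_1, goodE E.
Proof.
exists (fun _ _ _ => ord0); split.
- move=> c s _ h h' _; apply/ffunP => i; by rewrite !ord1.
- move=> s _ h c h' c' _; split; last by rewrite !ord1.
  by apply/ffunP => i; rewrite !ord1.
Qed.

Lemma good_field q t p k : prime p -> (0 < k)%N -> (q <= p ^ k)%N ->
  exists E : {ffun 'I_t -> 'I_(p ^ k)} -> 'I_(p ^ k) -> 'I_q -> 'I_(p ^ k), goodE E.
Proof.
move=> pp k0 qle; have [F _ eF] := pPrimePowerField pp k0.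
have qle' : (q <= #|F|)%N by rewrite eF.
pose a (j : 'I_q) : F := enum_val (widen_ord qle' j).
have ainj : injective a.
  by move=> x y /enum_val_inj /(congr1 val) /= /val_inj.
have := @field_good F q t a ainj.
by apply: good_transport; rewrite card_ord.
Qed.

Lemma good_exists q t n : (0 < n)%N -> (forall p, p \in primes n -> (q <= n`_p)%N) ->
  exists E : {ffun 'I_t -> 'I_n} -> 'I_n -> 'I_q -> 'I_n, goodE E.
Proof.
elim: n {-2}n (leqnn n) => [|N IH] n nN n0 Hq; first by move: nN n0; rewrite leqn0 => /eqP ->.
have [n1|n1] := leqP n 1.
  have -> : n = 1%N by apply/eqP; rewrite eqn_leq n1.
  exact: good_one.
set p := pdiv n; have pp : prime p := pdiv_prime n1.
have pn : p \in primes n by have := pi_pdiv n; rewrite n1.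
set m := n`_p^'.
have em : (n`_p * m)%N = n by rewrite /m partnC.
have np1 : (1 < n`_p)%N by rewrite p_part_gt1.
have m0 : (0 < m)%N := part_gt0 _ _.
have mN : (m <= N)%N.
  rewrite -ltnS (leq_trans _ nN) // -[X in (X < _)%N]mul1n -em ltn_pmul2r //.
have [E2 G2] : exists E : {ffun 'I_t -> 'I_m} -> 'I_m -> 'I_q -> 'I_m, goodE E.
  apply: IH => // r; rewrite primes_part mem_filter => /andP [rp rn].
  rewrite /m partn_part; first exact: Hq.
  by move=> x; rewrite !inE => /eqP ->.
have [E1 G1] : exists E : {ffun 'I_t -> 'I_(n`_p)} -> 'I_(n`_p) -> 'I_q -> 'I_(n`_p), goodE E.
  rewrite p_part; apply: good_field => //; first by rewrite logn_gt0.
  by rewrite -p_part; apply: Hq.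
have := good_prod G1 G2.
by apply: good_transport; rewrite card_prod !card_ord.
Qed.
Definition ptn q n := if n < q then n else n - q.
Lemma ptn_lt q n : n < q + q -> ptn q n < q.
Proof. rewrite /ptn; case: ifP => ? ?; lia. Qed.
Lemma ptn_inj q t i j1 j2 : t <= q -> i < q -> j1 < t -> j2 < t ->
  ptn q (i + j1) = ptn q (i + j2) -> j1 = j2.
Proof. rewrite /ptn; case: ifP => ?; case: ifP => ?; lia. Qed.
Lemma ptn_sep_aux q t i i' dl : t < q -> i < q -> i' < q -> 0 < dl < q ->
  (i' + q = i + dl \/ i' = i + dl) ->
  0 < t -> exists j', j' < t /\ forall j, j < t -> ptn q (i' + j') != ptn q (i + j).
Proof.
move=> tq iq iq' dlq hd t0.
case: (ltnP dl t) => hdt.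
  exists (t - dl); split; first lia.
  move=> j jt; apply/eqP; rewrite /ptn; repeat (case: ifP => ?); lia.
exists 0; split; first lia.
move=> j jt; apply/eqP; rewrite /ptn; repeat (case: ifP => ?); lia.
Qed.
Lemma ptn_sep q t i i' : t < q -> i < q -> i' < q -> i != i' ->
  0 < t -> exists j', j' < t /\ forall j, j < t -> ptn q (i' + j') != ptn q (i + j).
Proof.
move=> tq iq iq' /eqP ii t0.
case: (ltnP i i') => h.
  apply: (@ptn_sep_aux q t i i' (i' - i)) => //; lia.
apply: (@ptn_sep_aux q t i i' (i' + q - i)) => //; lia.
Qed.

Lemma modn_ptn q n : n < q + q -> n %% q = ptn q n.
Proof.
rewrite /ptn; case: ifP => h1 h2; first by rewrite modn_small.
have -> : n = (n - q) + q by lia.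
by rewrite modnDr modn_small; lia.
Qed.

Lemma bigmin_le (s : seq nat) x0 (F : nat -> nat) p :
  p \in s -> \big[minn/x0]_(i <- s) F i <= F p.
Proof.
elim: s => // a s IH; rewrite inE big_cons => /orP [/eqP -> | /IH h].
  exact: geq_minl.
exact: leq_trans (geq_minr _ _) h.
Qed.

Lemma bigmin_gt (s : seq nat) x0 (F : nat -> nat) b : b < x0 ->
  (forall p, p \in s -> b < F p) -> b < \big[minn/x0]_(i <- s) F i.
Proof.
elim: s => [|a s IH] h H; first by rewrite big_nil.
rewrite big_cons leq_min H ?mem_head //=; apply: IH => // p ps.
by apply: H; rewrite inE ps orbT.
Qed.

Lemma card_bigcup_le (I T : finType) (P : pred I) (F : I -> {set T}) :
  #|\bigcup_(i | P i) F i| <= \sum_(i | P i) #|F i|.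
Proof.
apply: (big_ind2 (fun (x : {set T}) y => #|x| <= y)) => //.
- by rewrite cards0.
- move=> x1 x2 y1 y2 h1 h2; apply: leq_trans (leq_card_setU _ _) _.
  exact: leq_add.
Qed.

Theorem mainTheorem10 (v t d : nat) :
  2 <= v -> 0 < t -> 0 < d ->
  (forall p, p \in primes v -> t + 1 < v`_p) ->
  d + 1 <= v ->
  exists A : array ((d + 1) * v ^ t) (min_prime_power v + t - 1) v,
    is_optimum_CDA d t A.
Proof.
move=> v2 t0 d0 Hp hd.
have v0 : 0 < v by lia.
have Hq : forall p, p \in primes v -> min_prime_power v <= v`_p.
  by move=> p hp; apply: bigmin_le.
have tq : t + 1 < min_prime_power v.
  apply: bigmin_gt => //.
  have pv : pdiv v \in primes v by have := pi_pdiv v; rewrite v2.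
  apply: leq_trans (Hp _ pv) _; exact: dvdn_leq v0 (dvdn_part _ _).
move: Hq tq; set q := min_prime_power v => Hq tq.
have q0 : 0 < q by lia.
have [E [Ga Gb]] := @good_exists q t v v0 Hq.
set k := q + t - 1.
pose pt (c : 'I_k) : 'I_q := Ordinal (ltn_pmod c q0).
pose RT : finType := ({ffun 'I_t -> 'I_v} * 'I_(d+1))%type.
have eN : #|RT| = (d+1) * v ^ t by rewrite card_prod card_ffun !card_ord mulnC.
pose rowmap (r : 'I_((d+1)*v ^ t)) : RT := enum_val (cast_ord (esym eN) r).
pose rowinv (x : RT) : 'I_((d+1)*v ^ t) := cast_ord eN (enum_rank x).
have rowK : cancel rowinv rowmap.
  by move=> x; rewrite /rowmap /rowinv cast_ordK enum_rankK.
have rowinj : injective rowmap.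
  by move=> x y /(congr1 enum_rank); rewrite !enum_valK => /cast_ord_inj.
pose L (l : 'I_(d+1)) : 'I_v := widen_ord hd l.
pose A : array _ k v := fun r c => E (rowmap r).1 (L (rowmap r).2) (pt c).
exists A; split; last by [].
have rhoP : forall T : interaction k v t, valid_int T -> forall r,
   reflect (forall j : 'I_t, forall c : 'I_k, val c = T.1 + j -> A r c = tnth T.2 j)
           (r \in rho A T).
  move=> T vT r; rewrite /rho inE; apply: (iffP forallP).
  - move=> H j c ec; have /existsP [c' /andP [/eqP ec' /eqP]] := H j.
    by have -> : c = c' by apply: val_inj; rewrite ec ec'.
  - move=> H j; have jk : T.1 + j < k by have := ltn_ord j; rewrite /valid_int in vT; lia.
    apply/existsP; exists (Ordinal jk); rewrite eqxx /=; apply/eqP.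
    exact: H.
have vq : forall T : interaction k v t, valid_int T -> T.1 < q.
  by move=> T; rewrite /valid_int; lia.
pose sw (T : interaction k v t) (j : 'I_t) : 'I_q := Ordinal (ltn_pmod (T.1 + j) q0).
have swinj : forall T : interaction k v t, valid_int T -> injective (sw T).
  move=> T vT j1 j2 /(congr1 val) /=.
  have := vq T vT; have := ltn_ord j1; have := ltn_ord j2 => h1 h2 h3.
  rewrite !modn_ptn; try lia.
  by move/ptn_inj => H; apply: val_inj; apply: (H t); lia.
have ptsw : forall (T : interaction k v t) (j : 'I_t) (c : 'I_k), val c = T.1 + j -> pt c = sw T j.
  by move=> T j c ec; apply: val_inj; rewrite /= ec.
have ex : forall T : interaction k v t, valid_int T -> forall l, exists r, r \in rho A T /\ (rowmap r).2 = l.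
  move=> T vT l.
  have finj := Ga (L l) (sw T) (swinj T vT).
  pose y : {ffun 'I_t -> 'I_v} := [ffun j => tnth T.2 j].
  pose h := invF finj y.
  have fh := f_invF finj y; move/ffunP: fh => fh.
  exists (rowinv (h, l)); rewrite rowK; split => //.
  apply/rhoP => // j c ec; rewrite /A rowK /= (ptsw T j c ec).
  by have := fh j; rewrite !ffunE.
have pair : forall T T' : interaction k v t, valid_int T -> valid_int T' -> T != T' ->
    forall r1 r2, r1 \in rho A T -> r1 \in rho A T' -> r2 \in rho A T -> r2 \in rho A T' ->
    r1 = r2.
  move=> T T' vT vT' neq r1 r2 /(rhoP _ vT) H1 /(rhoP _ vT') H1' /(rhoP _ vT) H2 /(rhoP _ vT') H2'.
  have iq := vq T vT; have iq' := vq T' vT'.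
  move: vT vT' neq H1 H1' H2 H2' iq iq'.
  case: T => i x; case: T' => i' x' /= vT vT' neq H1 H1' H2 H2' iq iq'.
  rewrite /valid_int /= in vT vT'.
  have colk : forall j, j < t -> i + j < k by move=> j; lia.
  have colk' : forall j, j < t -> i' + j < k by move=> j; lia.
  case: (eqVneq i i') => [eii | nii].
    have : x = x'.
      apply: eq_from_tnth => j.
      rewrite -(H1 j (Ordinal (colk j (ltn_ord j))) erefl).
      by rewrite (H1' j (Ordinal (colk j (ltn_ord j)))) //= eii.
    by move=> exx; move: neq; rewrite eii exx eqxx.
  have nii' : val i != val i' by [].
  have tq1 : t < q by lia.
  have [j' [j't Hsep]] := ptn_sep tq1 iq iq' nii' t0.
  pose s (jj : 'I_t.+1) : 'I_q :=
    Ordinal (ltn_pmod (if jj < t then i + jj else i' + j') q0).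
  have sinj : injective s.
    move=> a b /(congr1 val) /=.
    case: (ltnP a t) => ha; case: (ltnP b t) => hb.
    - rewrite !modn_ptn; try lia.
      by move/ptn_inj => H; apply: val_inj; apply: (H t); lia.
    - rewrite !modn_ptn; try lia.
      by move=> e; have := Hsep a ha; rewrite e eqxx.
    - rewrite !modn_ptn; try lia.
      by move=> e; have := Hsep b hb; rewrite e eqxx.
    - by move=> _; apply: ord_inj; have := ltn_ord a; have := ltn_ord b; lia.
  have agree : forall jj, E (rowmap r1).1 (L (rowmap r1).2) (s jj) =
                          E (rowmap r2).1 (L (rowmap r2).2) (s jj).
    move=> jj; case: (ltnP jj t) => hj.
    - pose c := Ordinal (colk jj hj).
      have -> : s jj = pt c by apply: val_inj; rewrite /= hj.
      change (A r1 c = A r2 c).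
      by rewrite (H1 (Ordinal hj) c erefl) (H2 (Ordinal hj) c erefl).
    - pose c := Ordinal (colk' j' j't).
      have -> : s jj = pt c by apply: val_inj; rewrite /= ltnNge hj.
      change (A r1 c = A r2 c).
      by rewrite (H1' (Ordinal j't) c erefl) (H2' (Ordinal j't) c erefl).
  have [eh el] := Gb s sinj _ _ _ _ agree.
  apply: rowinj; apply: injective_projections => //.
  by apply: val_inj; move/(congr1 val): el.
split.
- move=> T vT; have d1 : d < d + 1 by rewrite addn1.
  have [r [hr _]] := ex T vT (Ordinal d1); apply/set0Pn; exists r; exact: hr.
- move=> S Sv cS T vT; split; last first.
    by move=> hT; rewrite /rhoS; exact: (bigcup_sup _ hT).
  move=> sub; apply/negPn/negP => nT.
  have low : d + 1 <= #|rho A T|.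
    have : [set: 'I_(d+1)] \subset [set (rowmap r).2 | r in rho A T].
      apply/subsetP => l _; have [r [hr el]] := ex T vT l; apply/imsetP; exists r => //.
    move/subset_leq_card; rewrite cardsT card_ord => h.
    exact: leq_trans h (leq_imset_card _ _).
  have up : #|rho A T| <= d.
    have sub2 : rho A T \subset \bigcup_(T' in S) (rho A T :&: rho A T').
      apply/subsetP => r hr; have := subsetP sub r hr; rewrite /rhoS => /bigcupP [T' hT' hr'].
      by apply/bigcupP; exists T' => //; rewrite inE hr hr'.
    apply: leq_trans (subset_leq_card sub2) _.
    apply: leq_trans (card_bigcup_le _ _) _.
    rewrite -[X in _ <= X]cS -sum1_card; apply: leq_sum => T' hT'.
    apply/card_le1_eqP => r1 r2; rewrite !in_setI => /andP[a1 b1] /andP[a2 b2].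
    have neqT : T != T' by apply/eqP => e; move: nT; rewrite e hT'.
    by have := pair T T' vT (Sv T' hT') neqT r1 r2 a1 b1 a2 b2 => ->.
  by have := leq_trans low up; rewrite addn1 ltnn.
Qed.
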